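(* Let $k\ge1$ and let $\varphi_k,\psi_k,G_{k-1},H_{k-1}$ be as defined below. If $g\in G_{k-1}$ is a product of two squares in $\mathbb{F}_2$ (i.e. $g=a^2b^2$ with $a,b\in\mathbb{F}_2$), then $\varphi_k(g)$ is even. Likewise, if $g\in H_{k-1}$ is a product of two squares in $\mathbb{F}_2$, then $\psi_k(g)$ is even.
   Context: $\mathbb{F}_2$ is the free group on $x,y$. Let $\tilde K$ be the graph with vertex set $\mathbb{Z}^2$ and oriented edges $x^iy^jX$ from $(i,j)$ to $(i+1,j)$ and $x^iy^jY$ from $(i,j)$ to $(i,j+1)$. A $1$-chain is written $\alpha=P_\alpha(x,y)X+Q_\alpha(x,y)Y$ with $P_\alpha,Q_\alpha$ integer Laurent polynomials (coefficient of $x^iy^j$ in $P_\alpha$ = coefficient of edge $x^iy^jX$, similarly for $Q_\alpha$). For $g\in[\mathbb{F}_2,\mathbb{F}_2]$ written as a word in $x^{\pm1},y^{\pm1}$, the cycle $\alpha_g$ is the $1$-cycle traced by the lattice path from $(0,0)$ in which $x,x^{-1},y,y^{-1}$ move by $(1,0),(-1,0),(0,1),(0,-1)$ along the corresponding edges, each edge counted with sign $+1$ if traversed in its orientation and $-1$ otherwise; its homology class depends only on $g$. Put $f_g(y)=P_{\alpha_g}(1,y)$ and $g_g(x)=Q_{\alpha_g}(x,1)$. Set $G_0=H_0=[\mathbb{F}_2,\mathbb{F}_2]$ and inductively, for $k\ge1$, $\varphi_k(g)=f_g^{(k)}(1)/k!$ for $g\in G_{k-1}$, $\psi_k(g)=g_g^{(k)}(1)/k!$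 for $g\in H_{k-1}$ (integers), $G_k=\ker\varphi_k$, $H_k=\ker\psi_k$. These $\varphi_k,\psi_k$ are group homomorphisms to $\mathbb{Z}$. *)

(* Defs.v *)
From mathcomp Require Import all_boot all_order all_algebra.
Set Implicit Arguments. Unset Strict Implicit. Unset Printing Implicit Defensive.
Import Order.TTheory GRing.Theory Num.Theory.
Local Open Scope ring_scope.

(* Letters of words in F_2 = <x,y>: (is_x, is_positive).
   (true,true)=x, (true,false)=x^-1, (false,true)=y, (false,false)=y^-1. *)
Definition letter := (bool * bool)%type.
Definition word := seq letter.

Definition inv_letter (l : letter) : letter := (l.1, ~~ l.2).
Definition inv_word (w : word) : word := rev (map inv_letter w).

Definition reduce (w : word) : word :=
  foldr (fun l acc => match acc with
                      | l' :: t => if l' == inv_letter l then t else l :: acc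
                      | [::] => [:: l]
                      end) [::] w.

Definition free_eq (u v : word) : Prop := reduce u = reduce v.

Definition commw (u v : word) : word := inv_word u ++ inv_word v ++ u ++ v.

(* Membership in the commutator subgroup [F_2,F_2]: the subgroup generated by
   commutators, i.e. products of commutators (inverse of a commutator is one). *)
Definition in_comm (w : word) : Prop :=
  exists s : seq (word * word),
    free_eq w (flatten [seq commw p.1 p.2 | p <- s]).

(* Signed oriented edges of the lattice graph K~:
   edir = true : edge x^i y^j X from (i,j) to (i+1,j)
   edir = false: edge x^i y^j Y from (i,j) to (i,j+1). *)
Record sedge := SEdge { edir : bool; ei : int; ej : int; esgn : int }.

(* The 1-chain traced by the lattice path of a word starting at (i,j),
   as a formal sum (list) of signed edges. *)
Fixpoint walk (i j : int) (w : word) : seq sedge :=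
  match w with
  | [::] => [::]
  | l :: t =>
    if l.1 then
      if l.2 then SEdge true i j 1 :: walk (i + 1) j t
      else SEdge true (i - 1) j (-1) :: walk (i - 1) j t
    else
      if l.2 then SEdge false i j 1 :: walk i (j + 1) t
      else SEdge false i (j - 1) (-1) :: walk i (j - 1) t
  end.

Definition alpha (w : word) : seq sedge := walk 0 0 w.

(* One-variable Laurent polynomials as formal sums of (exponent, coefficient). *)
Definition laurent := seq (int * int).

(* f_g(y) = P_alpha(1,y) : each X-edge x^i y^j X with sign s contributes s*y^j. *)
Definition fpoly (w : word) : laurent :=
  [seq (ej e, esgn e) | e <- alpha w & edir e].
(* g_g(x) = Q_alpha(x,1) : each Y-edge x^i y^j Y with sign s contributes s*x^i. *)
Definition gpoly (w : word) : laurent :=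
  [seq (ei e, esgn e) | e <- alpha w & ~~ edir e].

(* Falling factorial z(z-1)...(z-k+1) = k-th derivative of t^z at t = 1. *)
Fixpoint ffact (z : int) (k : nat) : int :=
  match k with
  | 0%N => 1
  | k'.+1 => ffact z k' * (z - k'%:Z)
  end.

Definition deriv_at1_div_fact (k : nat) (f : laurent) : rat :=
  \sum_(t <- f) ((t.2 * ffact t.1 k)%:~R / (k`!)%:R).

Definition phi (k : nat) (w : word) : rat := deriv_at1_div_fact k (fpoly w).
Definition psi (k : nat) (w : word) : rat := deriv_at1_div_fact k (gpoly w).

(* G_k and H_k (G_0 = H_0 = [F_2,F_2], G_k = ker phi_k on G_{k-1}). *)
Definition inG (k : nat) (w : word) : Prop :=
  in_comm w /\ forall m : nat, (0 < m <= k)%N -> phi m w = 0.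
Definition inH (k : nat) (w : word) : Prop :=
  in_comm w /\ forall m : nat, (0 < m <= k)%N -> psi m w = 0.

Definition prod_two_squares (w : word) : Prop :=
  exists a b : word, free_eq w (a ++ a ++ b ++ b).

Definition is_even_rat (q : rat) : Prop := exists m : int, q = (2 * m)%:~R.

(* Main.v *)
Require Import Defs.
From mathcomp Require Import all_boot all_order all_algebra.
From mathcomp Require Import ring.
Import Order.TTheory GRing.Theory Num.Theory.
Local Open Scope ring_scope.

Definition bz (e : int) (m : nat) : rat := (ffact e m)%:~R / (m`!)%:R.

Lemma ffactS (z : int) (m : nat) : ffact (z + 1) m.+1 = (z + 1) * ffact z m.
Proof.
elim: m => [|m IH] /=; first by rewrite mulr1 subr0 mul1r.
rewrite /= in IH. rewrite IH -mulrA; congr (_ * _).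
rewrite -[m.+1]addn1 PoszD. ring.
Qed.

Lemma ffact0 (m : nat) : ffact 0 m.+1 = 0.
Proof. by elim: m => [|m IH] //=; rewrite /= in IH; rewrite IH mul0r. Qed.

Lemma bz0 e : bz e 0 = 1.
Proof. by rewrite /bz /= divr1. Qed.

Lemma bz_pascal e m : bz (e + 1) m.+1 = bz e m.+1 + bz e m.
Proof.
rewrite /bz ffactS /= factS natrM !intrM intrD intrB.
have h1 : (m`!)%:R != 0 :> rat by rewrite pnatr_eq0 -lt0n fact_gt0.
have h2 : (m.+1)%:R != 0 :> rat by rewrite pnatr_eq0.
rewrite -[m.+1]addn1 natrD in h2 *. field.
by rewrite h1 h2.
Qed.

Lemma bz_int e m : exists z : int, bz e m = z%:~R.
Proof.
elim: m e => [|m IH] e; first by exists 1; rewrite bz0.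
have up : forall z, (exists n : int, bz z m.+1 = n%:~R) -> exists n : int, bz (z+1) m.+1 = n%:~R.
  move=> z [n hn]; have [n2 h2] := IH z; exists (n + n2); by rewrite bz_pascal hn h2 intrD.
have down : forall z, (exists n : int, bz z m.+1 = n%:~R) -> exists n : int, bz (z-1) m.+1 = n%:~R.
  move=> z [n hn]; have [n2 h2] := IH (z - 1); exists (n - n2).
  have hp := bz_pascal (z - 1) m; rewrite subrK hn h2 in hp. rewrite intrB hp; ring.
have b0 : exists n : int, bz 0 m.+1 = n%:~R by exists 0; rewrite /bz ffact0 mul0r.
case: e => n.
  elim: n => [|n IHn] //. rewrite -addn1 PoszD. exact: up.
elim: n => [|n IHn]. by have := down 0 b0; rewrite sub0r.
have -> : Negz n.+1 = Negz n - 1 by rewrite !NegzE -[n.+2]addn1 PoszD; ring.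
exact: down.
Qed.

Definition T (m : nat) (L : laurent) : rat := \sum_(t <- L) (t.2%:~R * bz t.1 m).
Definition sh (q : int) (L : laurent) : laurent := [seq (t.1 + q, t.2) | t <- L].

Lemma T_cat m L1 L2 : T m (L1 ++ L2) = T m L1 + T m L2.
Proof. by rewrite /T big_cat. Qed.

Lemma T_cons m t L : T m (t :: L) = t.2%:~R * bz t.1 m + T m L.
Proof. by rewrite /T big_cons. Qed.

Lemma phiT m w : phi m w = T m (fpoly w).
Proof. by rewrite /phi /deriv_at1_div_fact /T; apply: eq_bigr => t _; rewrite intrM mulrA. Qed.
Lemma psiT m w : psi m w = T m (gpoly w).
Proof. by rewrite /psi /deriv_at1_div_fact /T; apply: eq_bigr => t _; rewrite intrM mulrA. Qed.

Lemma sh_comp q r L : sh r (sh q L) = sh (q + r) L.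
Proof. by elim: L => //= t L ->; rewrite addrA. Qed.

Lemma sh0 L : sh 0 L = L.
Proof. by elim: L => //= [[a b] L] ->; rewrite addr0. Qed.

Lemma T0_sh q L : T 0 (sh q L) = T 0 L.
Proof. by elim: L => //= t L IH; rewrite !T_cons IH !bz0. Qed.

Lemma T_sh1 m L : T m.+1 (sh 1 L) = T m.+1 L + T m L.
Proof.
elim: L => [|t L IH]; first by rewrite /T !big_nil addr0.
rewrite /= !T_cons IH /= bz_pascal; ring.
Qed.

Definition Pq (q : int) := forall (L : laurent) (k : nat),
  (forall j, (j < k)%N -> T j L = 0) ->
  (forall j, (j < k)%N -> T j (sh q L) = 0) /\ T k (sh q L) = T k L.

Lemma Pq_comp q r : Pq q -> Pq r -> Pq (q + r).
Proof.
move=> hq hr L k hL; have [h1 h2] := hq L k hL; have [h3 h4] := hr _ k h1.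
by rewrite -sh_comp; split => //; rewrite h4.
Qed.

Lemma Pq1 : Pq 1.
Proof.
move=> L k hL; split.
  case=> [|j] hj; first by rewrite T0_sh hL.
  rewrite T_sh1 !hL ?addr0 //; exact: ltn_trans (ltnSn j) hj.
case: k hL => [|k] hL; first by rewrite T0_sh.
by rewrite T_sh1 (hL k) ?addr0.
Qed.

Lemma Pqm1 : Pq (-1).
Proof.
move=> L k hL.
have rel0 : T 0 L = T 0 (sh (-1) L) by rewrite T0_sh.
have relS : forall m, T m.+1 L = T m.+1 (sh (-1) L) + T m (sh (-1) L).
  by move=> m; rewrite -T_sh1 sh_comp addNr sh0.
have H : forall j, (j < k)%N -> T j (sh (-1) L) = 0.
  elim=> [|j IH] hj; first by rewrite -rel0 hL.
  have := relS j; rewrite hL // IH ?(ltn_trans _ hj) // addr0 => <- //.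
split => //.
case: k hL H => [|k] hL H; first by rewrite rel0.
by rewrite relS (H k) // addr0.
Qed.

Lemma Pq_all q : Pq q.
Proof.
have P0 : Pq 0 by move=> L k hL; rewrite sh0.
case: q => n.
  elim: n => [|n IHn] //. rewrite -addn1 PoszD. exact: Pq_comp _ _ IHn Pq1.
elim: n => [|n IHn]. by have := Pq_comp _ _ P0 Pqm1; rewrite add0r.
have -> : Negz n.+1 = Negz n + (-1) by rewrite !NegzE -[n.+2]addn1 PoszD; ring.
exact: Pq_comp _ _ IHn Pqm1.
Qed.

Lemma parity k L q : (forall j, (j < k)%N -> T j (L ++ sh q L) = 0) ->
  T k (L ++ sh q L) = 2 * T k L.
Proof.
move=> H.
have hL : forall n j, (j < n)%N -> (j < k)%N -> T j L = 0.
  elim=> [|n IH] j // hjn hjk.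
  have hi : forall i, (i < j)%N -> T i L = 0.
    move=> i hij; apply: (IH i); first exact: leq_trans hij hjn.
    exact: ltn_trans hij hjk.
  have [_ e] := Pq_all q L j hi.
  have := H j hjk; rewrite T_cat e => /eqP.
  by rewrite -mulr2n mulrn_eq0 /= => /eqP.
have [_ e] := Pq_all q L k (fun j hj => hL j.+1 j (ltnSn j) hj).
by rewrite T_cat e mulr2n mulrDl mul1r.
Qed.

Definition lsgn (l : letter) : int := if l.2 then 1 else -1.
Definition esum (P : pred letter) (w : word) : int := \sum_(l <- w | P l) lsgn l.
Definition ex := esum (fun l => l.1).
Definition ey := esum (fun l => ~~ l.1).

Lemma esum_cons P l w : esum P (l :: w) = (if P l then lsgn l else 0) + esum P w.
Proof. by rewrite /esum big_cons; case: (P l); rewrite ?add0r. Qed.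

Lemma esum_cat P u v : esum P (u ++ v) = esum P u + esum P v.
Proof. by rewrite /esum big_cat. Qed.

Definition Pinv (P : pred letter) := forall l, P (inv_letter l) = P l.

Lemma reduce_cases l t : reduce (l :: t) = l :: reduce t \/
  exists t', reduce t = inv_letter l :: t' /\ reduce (l :: t) = t'.
Proof.
change (reduce (l::t)) with (match reduce t with [::] => [:: l] | l' :: t' => if l' == inv_letter l then t' else l :: reduce t end).
case E: (reduce t) => [|l' t']; first by left.
case: ifP => [/eqP H | _]; last by left.
by right; exists t'; rewrite -H.
Qed.

Lemma esum_reduce P w : Pinv P -> esum P (reduce w) = esum P w.
Proof.
move=> hP; elim: w => [|l t IH] //.
case: (reduce_cases l t) => [-> | [t' [E ->]]]; first by rewrite !esum_cons IH.
rewrite esum_cons -IH E esum_cons hP addrA.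
clear E; case: l => [a []]; rewrite /lsgn /=; case: (P (a, _)); rewrite ?addr0 ?subrr ?addNr ?add0r //.

Qed.

Lemma esum_inv P u : Pinv P -> esum P (inv_word u) = - esum P u.
Proof.
move=> hP; elim: u => [|l t IH]; first by rewrite /esum /inv_word !big_nil oppr0.
rewrite /inv_word /= rev_cons -cats1 esum_cat -/(inv_word t) IH esum_cons esum_cons /esum big_nil hP.
case: l => [a []]; rewrite /lsgn /=; case: (P (a, _)); rewrite ?addr0 ?opprD ?oppr0 //; ring.
Qed.

Lemma esum_comm P w : Pinv P -> in_comm w -> esum P w = 0.
Proof.
move=> hP [s]; rewrite /free_eq => E.
rewrite -(esum_reduce P w hP) E (esum_reduce _ _ hP).
elim: s {E} => [|p s IH] /=; first by rewrite /esum big_nil.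
by rewrite esum_cat IH /commw !esum_cat !esum_inv //; ring.
Qed.

Lemma Pinv_x : Pinv (fun l => l.1). Proof. by []. Qed.
Lemma Pinv_y : Pinv (fun l => ~~ l.1). Proof. by []. Qed.

Definition Lx (i j : int) (w : word) : laurent :=
  [seq (ej e, esgn e) | e <- walk i j w & edir e].

Lemma fpolyE w : fpoly w = Lx 0 0 w. Proof. by []. Qed.

Lemma Lx_cons i j l t : Lx i j (l :: t) =
  if l.1 then
    if l.2 then (j, 1) :: Lx (i + 1) j t else (j, -1) :: Lx (i - 1) j t
  else if l.2 then Lx i (j + 1) t else Lx i (j - 1) t.
Proof. by case: l => [[] []]. Qed.

Lemma walk_cat i j u v : walk i j (u ++ v) = walk i j u ++ walk (i + ex u) (j + ey u) v.
Proof.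
elim: u i j => [|l t IH] i j /=; first by rewrite /ex /ey /esum !big_nil !addr0.
rewrite /ex /ey !esum_cons -/ex -/ey.
case: l => [[] []] /=; rewrite IH /lsgn /= ?add0r !addrA //.
Qed.

Lemma Lx_cat i j u v : Lx i j (u ++ v) = Lx i j u ++ Lx (i + ex u) (j + ey u) v.
Proof. by rewrite /Lx walk_cat filter_cat map_cat. Qed.

Lemma Lx_shift0 w : forall i i' j q : int, Lx i (j + q) w = sh q (Lx i' j w).
Proof.
elim: w => [|l t IH] i i' j q //.
rewrite !Lx_cons; case: l => [[] []] //=.
- by rewrite (IH (i + 1) (i' + 1) j q).
- by rewrite (IH (i - 1) (i' - 1) j q).
- by rewrite addrAC (IH i i' (j + 1) q).
- by rewrite addrAC (IH i i' (j - 1) q).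
Qed.

Lemma Lx_shift i j w : Lx i j w = sh j (Lx 0 0 w).
Proof. by rewrite -(Lx_shift0 w i 0 0 j) add0r. Qed.

Lemma T_Lx_reduce m w : forall i j, T m (Lx i j (reduce w)) = T m (Lx i j w).
Proof.
elim: w => [|l t IH] i j //.
case: (reduce_cases l t) => [-> | [t' [E ->]]].
  by rewrite !Lx_cons; case: l => [[] []] /=; rewrite ?T_cons IH.
case: l E => [[] []] E /=; rewrite ?T_cons -IH E Lx_cons /= ?T_cons ?addrK ?subrK //.
- by rewrite addrA mulN1r mul1r subrr add0r.
- by rewrite addrA mulN1r mul1r addNr add0r.
Qed.

Lemma T0_Lx w : forall i j, T 0 (Lx i j w) = (ex w)%:~R.
Proof.
elim: w => [|l t IH] i j; first by rewrite /T /ex /esum !big_nil.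
rewrite Lx_cons /ex esum_cons -/ex.
case: l => [[] []] /=; rewrite ?T_cons IH ?bz0 /lsgn /= ?add0r ?intrD //.
Qed.

Definition sw (l : letter) : letter := (~~ l.1, l.2).

Definition Ly (i j : int) (w : word) : laurent :=
  [seq (ei e, esgn e) | e <- walk i j w & ~~ edir e].

Lemma Ly_sw w : forall i j, Ly i j w = Lx j i (map sw w).
Proof.
elim: w => [|l t IH] i j //.
by case: l => [[] []]; rewrite /Ly /Lx /= -/(Ly _ _ t) -/(Lx _ _ _) IH.
Qed.

Lemma reduce_sw w : reduce (map sw w) = map sw (reduce w).
Proof.
elim: w => [|l t IH] //.
change (reduce (l::t)) with (match reduce t with [::] => [:: l] | l' :: t' => if l' == inv_letter l then t' else l :: reduce t end).
change (reduce (map sw (l::t))) with (match reduce (map sw t) with [::] => [:: sw l] | l' :: t' => if l' == inv_letter (sw l) then t' else sw l :: reduce (map sw t) end).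
rewrite IH; case: (reduce t) => [|l' t'] //=.
have -> : (sw l' == inv_letter (sw l)) = (l' == inv_letter l).
  by case: l l' => [[] []] [[] []].
by case: ifP.
Qed.

Lemma ex_sw w : ex (map sw w) = ey w.
Proof.
elim: w => [|l t IH]; first by rewrite /ex /ey /esum !big_nil.
by rewrite /= /ex /ey !esum_cons -/ex -/ey IH; case: l => [[] []].
Qed.

Lemma ey_sw w : ey (map sw w) = ex w.
Proof.
elim: w => [|l t IH]; first by rewrite /ex /ey /esum !big_nil.
by rewrite /= /ex /ey !esum_cons -/ex -/ey IH; case: l => [[] []].
Qed.

Lemma T_int m L : exists z : int, T m L = z%:~R.
Proof.
elim: L => [|t L [z hz]]; first by exists 0; rewrite /T big_nil.
have [y hy] := bz_int t.1 m.
by exists (t.2 * y + z); rewrite T_cons hz hy intrD intrM.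
Qed.

Lemma core k w a b : (0 < k)%N -> ex w = 0 -> ey w = 0 ->
  reduce w = reduce (a ++ a ++ b ++ b) ->
  (forall m, (0 < m < k)%N -> phi m w = 0) -> is_even_rat (phi k w).
Proof.
move=> hk hx hy E hphi.
have Hw : forall m, phi m w = T m (Lx 0 0 (a ++ a ++ b ++ b)).
  by move=> m; rewrite phiT fpolyE -T_Lx_reduce E T_Lx_reduce.
have hx' : ex (a ++ a ++ b ++ b) = 0.
  by rewrite /ex -(esum_reduce _ _ Pinv_x) -E (esum_reduce _ _ Pinv_x).
have hy' : ey (a ++ a ++ b ++ b) = 0.
  by rewrite /ey -(esum_reduce _ _ Pinv_y) -E (esum_reduce _ _ Pinv_y).
have eyb : ey b = - ey a.
  move: hy'; rewrite /ey !esum_cat -/(ey a) -/(ey b) => /eqP.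
  have -> : ey a + (ey a + (ey b + ey b)) = (ey a + ey b) *+ 2 by rewrite mulr2n; ring.
  by rewrite mulrn_eq0 /= addr_eq0 => /eqP ->; rewrite opprK.
set q := ey a.
set A := Lx 0 0 a; set B := Lx 0 0 b.
set h := A ++ sh q B.
have Hh : forall m, phi m w = T m (h ++ sh q h).
  move=> m; rewrite Hw !Lx_cat.
  rewrite (Lx_shift _ (0 + ey a) a) (Lx_shift _ (0 + ey a + ey a) b)
          (Lx_shift _ (0 + ey a + ey a + ey b) b) -/A -/B.
  rewrite eyb -/q add0r.
  have -> : q + q + - q = q by ring.
  rewrite /h /sh map_cat -/(sh q A) -/(sh q B) -/(sh q (sh q B)) sh_comp !T_cat; ring.
have [z hz] := T_int k h.
exists z.
rewrite Hh parity ?hz ?intrM //.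
move=> j hj; rewrite -Hh.
case: j hj => [|j] hj; last by apply: hphi.
by rewrite phiT fpolyE T0_Lx hx.
Qed.

Lemma phi_sw m g : psi m g = phi m (map sw g).
Proof. by rewrite psiT phiT fpolyE -Ly_sw. Qed.

Theorem lemma3p4 (k : nat) (hk : (0 < k)%N) :
  (forall g : word, inG k.-1 g -> prod_two_squares g -> is_even_rat (phi k g)) /\
  (forall g : word, inH k.-1 g -> prod_two_squares g -> is_even_rat (psi k g)).
Proof.
have hm : forall m, (0 < m < k)%N -> (0 < m <= k.-1)%N.
  move=> m /andP [h1 h2]; rewrite h1 /= -ltnS prednK //.
split.
  move=> g [hc hG] [a [b E]].
  apply: (core _ _ a b hk (esum_comm _ _ Pinv_x hc) (esum_comm _ _ Pinv_y hc) E).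
  by move=> m /hm /hG.
move=> g [hc hG] [a [b E]].
rewrite phi_sw.
apply: (core _ _ (map sw a) (map sw b) hk).
- by rewrite ex_sw; apply: esum_comm _ _ Pinv_y hc.
- by rewrite ey_sw; apply: esum_comm _ _ Pinv_x hc.
- by rewrite reduce_sw E -reduce_sw !map_cat.
by move=> m /hm /hG; rewrite phi_sw.
Qed.
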